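(* Let $H$ be a separable complex Hilbert space, $(\Omega,\mu)$ a measure space with positive measure, and let $K\in B(H)$ have closed range. Let $F:\Omega\to H$ be a Parseval continuous $K$-frame of $H$ with analysis operator $T$, and let $G:\Omega\to H$ be weakly measurable. Then $G$ is a dual continuous $K$-Bessel sequence of $F$ if and only if there exists $\varphi\in B(H,L^2(\Omega,\mu))$ such that $T^{\ast}\varphi=0$ and $(\varphi f)(\omega)=\langle f,G(\omega)-K^{\dagger}F(\omega)\rangle$ for all $f\in H$ and all $\omega\in\Omega$.
   Context: A map $F:\Omega\to H$ is weakly measurable if $\omega\mapsto\langle f,F(\omega)\rangle$ is measurable for every $f\in H$. A continuous Bessel sequence is a weakly measurable $G$ with $\int_\Omega|\langle f,G(\omega)\rangle|^2\,d\mu(\omega)\le B\|f\|^2$ for all $f\in H$, for some $B>0$. A Parseval continuous $K$-frame is a weakly measurable $F$ with $\int_\Omega|\langle f,F(\omega)\rangle|^2\,d\mu(\omega)=\|K^{\ast}f\|^2$ for all $f\in H$. The analysis operator of $F$ is $T:H\to L^2(\Omega,\mu)$, $Tf=\{\langle f,F(\omega)\rangle\}_{\omega}$, and $T^{\ast}c=\int_\Omega c(\omega)F(\omega)\,d\mu(\omega)$. A dual continuous $K$-Bessel sequence of $F$ is a continuous Bessel sequence $G$ such that $Kf=\int_\Omega\langle f,G(\omega)\rangle F(\omega)\,d\mu(\omega)$ for all $f\in H$. $K^{\dagger}$ denotes the Moore–Penrose pseudo-inverse of the closed-range operator $K$. *)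

(* Defs.v *)
From HB Require Import structures.
From mathcomp Require Import all_boot all_order all_algebra.
From mathcomp Require Import all_classical all_reals all_analysis.
From mathcomp Require Import complex.
Set Implicit Arguments. Unset Strict Implicit. Unset Printing Implicit Defensive.
Import Order.TTheory GRing.Theory Num.Theory.
Import numFieldNormedType.Exports.
Local Open Scope classical_set_scope.
Local Open Scope ring_scope.

Section HilbertDefs.
Variables (R : realType) (V : lmodType R[i]) (inner : V -> V -> R[i]).

Local Notation Re := (@complex.Re R).
Local Notation Im := (@complex.Im R).

Definition cabs2 (z : R[i]) : R := Re z ^+ 2 + Im z ^+ 2.

Definition hnorm (x : V) : R := Num.sqrt (Re (inner x x)).

Definition inner_product : Prop :=
  [/\ forall (a : R[i]) (x y z : V), inner (a *: x + y) z = a * inner x z + inner y z,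
      forall x y : V, inner y x = conjc (inner x y),
      forall x : V, 0 <= Re (inner x x) &
      forall x : V, inner x x = 0 -> x = 0].

Definition hcomplete : Prop :=
  forall u : nat -> V,
    (forall e : R, 0 < e -> exists N : nat, forall m n : nat,
        (N <= m)%N -> (N <= n)%N -> hnorm (u m - u n) < e) ->
    exists l : V, forall e : R, 0 < e -> exists N : nat, forall n : nat,
        (N <= n)%N -> hnorm (u n - l) < e.

Definition hseparable : Prop :=
  exists D : nat -> V, forall (x : V) (e : R), 0 < e -> exists n : nat, hnorm (x - D n) < e.

Definition separable_hilbert_space : Prop :=
  [/\ inner_product, hcomplete & hseparable].

Definition bounded_linear (A : V -> V) : Prop :=
  (forall (a : R[i]) (x y : V), A (a *: x + y) = a *: A x + A y) /\
  (exists c : R, forall x : V, hnorm (A x) <= c * hnorm x).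

Definition is_adjoint (A B : V -> V) : Prop :=
  forall x y : V, inner (A x) y = inner x (B y).

Definition closed_range (A : V -> V) : Prop :=
  forall y : V, (forall e : R, 0 < e -> exists x : V, hnorm (A x - y) < e) ->
    exists x : V, A x = y.

Definition is_MP_inverse (A Ad : V -> V) : Prop :=
  [/\ bounded_linear Ad,
      forall x, A (Ad (A x)) = A x,
      forall x, Ad (A (Ad x)) = Ad x,
      is_adjoint (fun x => A (Ad x)) (fun x => A (Ad x)) &
      is_adjoint (fun x => Ad (A x)) (fun x => Ad (A x))].

Variables (d : measure_display) (T : measurableType d)
          (mu : {measure set T -> \bar R}).

Definition cmeasurable (g : T -> R[i]) : Prop :=
  measurable_fun setT (fun w => Re (g w)) /\ measurable_fun setT (fun w => Im (g w)).

Definition cintegrable (g : T -> R[i]) : Prop :=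
  mu.-integrable setT (fun w => (Re (g w))%:E) /\
  mu.-integrable setT (fun w => (Im (g w))%:E).

Definition cintegral (g : T -> R[i]) : R[i] :=
  Complex (Rintegral mu setT (fun w => Re (g w))) (Rintegral mu setT (fun w => Im (g w))).

Definition sqint (g : T -> R[i]) : \bar R := (\int[mu]_w (cabs2 (g w))%:E)%E.

Definition weakly_measurable (F : T -> V) : Prop :=
  forall f : V, cmeasurable (fun w => inner f (F w)).

Definition cont_bessel (G : T -> V) : Prop :=
  weakly_measurable G /\
  exists B : R, 0 < B /\ forall f : V, (sqint (fun w => inner f (G w)) <= (B * hnorm f ^+ 2)%:E)%E.

Definition parseval_cont_Kframe (Kadj : V -> V) (F : T -> V) : Prop :=
  weakly_measurable F /\
  forall f : V, sqint (fun w => inner f (F w)) = (hnorm (Kadj f) ^+ 2)%:E.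

(* v = \int_Omega c(w) F(w) dmu(w) in the weak sense:
   <v, h> = \int c(w) <F(w), h> dmu(w) for all h  (i.e. v = T^* c) *)
Definition weak_integral_is (c : T -> R[i]) (F : T -> V) (v : V) : Prop :=
  forall h : V, cintegrable (fun w => c w * inner (F w) h) /\
                inner v h = cintegral (fun w => c w * inner (F w) h).

Definition dual_cont_K_bessel (K : V -> V) (F G : T -> V) : Prop :=
  cont_bessel G /\
  forall f : V, weak_integral_is (fun w => inner f (G w)) F (K f).

(* phi is (a representative of) a bounded operator H -> L^2(Omega, mu) *)
Definition bounded_to_L2 (phi : V -> T -> R[i]) : Prop :=
  [/\ forall f : V, cmeasurable (phi f) /\ (sqint (phi f) < +oo)%E,
      forall (a : R[i]) (f g : V) (w : T), phi (a *: f + g) w = a * phi f w + phi g w &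
      exists c : R, forall f : V, (sqint (phi f) <= (c * hnorm f ^+ 2)%:E)%E].

End HilbertDefs.

(* Main.v *)
Require Import Defs.
From HB Require Import structures.
From mathcomp Require Import all_boot all_order all_algebra.
From mathcomp Require Import all_classical all_reals all_analysis.
From mathcomp Require Import complex.
From mathcomp Require Import measurable_realfun.
From mathcomp Require Import ring lra.
Import Order.TTheory GRing.Theory Num.Theory.
Local Open Scope classical_set_scope.
Local Open Scope ring_scope.
Set Implicit Arguments. Unset Strict Implicit. Unset Printing Implicit Defensive.


Section Cplx.
Variable R : realType.
Local Notation Re := (@complex.Re R).
Local Notation Im := (@complex.Im R).
Lemma cext (z w : R[i]) : Re z = Re w -> Im z = Im w -> z = w.
Proof. by case: z => a b; case: w => c e /= -> ->. Qed.
Lemma cReD (x y : R[i]) : Re (x + y) = Re x + Re y. Proof. by case: x => a b; case: y => c e. Qed.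
Lemma cImD (x y : R[i]) : Im (x + y) = Im x + Im y. Proof. by case: x => a b; case: y => c e. Qed.
Lemma cReB (x y : R[i]) : Re (x - y) = Re x - Re y. Proof. by case: x => a b; case: y => c e. Qed.
Lemma cImB (x y : R[i]) : Im (x - y) = Im x - Im y. Proof. by case: x => a b; case: y => c e. Qed.
Lemma cReM (x y : R[i]) : Re (x * y) = Re x * Re y - Im x * Im y. Proof. by case: x => a b; case: y => c e. Qed.
Lemma cImM (x y : R[i]) : Im (x * y) = Re x * Im y + Im x * Re y. Proof. by case: x => a b; case: y => c e. Qed.
Lemma cReN (x : R[i]) : Re (- x) = - Re x. Proof. by case: x. Qed.
Lemma cImN (x : R[i]) : Im (- x) = - Im x. Proof. by case: x. Qed.
Lemma cReJ (x : R[i]) : Re (x^*)%C = Re x. Proof. by case: x. Qed.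
Lemma cImJ (x : R[i]) : Im (x^*)%C = - Im x. Proof. by case: x. Qed.
Lemma cReC (r : R) : Re (r%:C)%C = r. Proof. by []. Qed.
Lemma cImC (r : R) : Im (r%:C)%C = 0. Proof. by []. Qed.
Lemma cRe0 : Re 0 = 0. Proof. by []. Qed.
Lemma cIm0 : Im 0 = 0. Proof. by []. Qed.
Lemma cRe1 : Re 1 = 1. Proof. by []. Qed.
Lemma cIm1 : Im 1 = 0. Proof. by []. Qed.
Definition ci : R[i] := Complex 0 1.
Lemma cRei : Re ci = 0. Proof. by []. Qed.
Lemma cImi : Im ci = 1. Proof. by []. Qed.
Lemma ciJ : (ci^*)%C = - ci. Proof. by apply: cext; rewrite /= ?oppr0. Qed.
Lemma cRecpx (a b : R) : Re (Complex a b) = a. Proof. by []. Qed.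
Lemma cImcpx (a b : R) : Im (Complex a b) = b. Proof. by []. Qed.
Definition cE := (cReD, cImD, cReB, cImB, cReM, cImM, cReN, cImN, cReJ, cImJ,
  cReC, cImC, cRe0, cIm0, cRe1, cIm1, cRei, cImi, cRecpx, cImcpx).
Lemma cabs2_ge0 (z : R[i]) : 0 <= cabs2 z.
Proof. by rewrite /cabs2 addr_ge0 // sqr_ge0. Qed.
Lemma cabs2_eq0 (z : R[i]) : cabs2 z = 0 -> z = 0.
Proof.
rewrite /cabs2 => h. have h1 : Re z ^+ 2 = 0.
  by apply/eqP; rewrite eq_le sqr_ge0 andbT -h lerDl sqr_ge0.
have h2 : Im z ^+ 2 = 0 by move: h; rewrite h1 add0r.
by apply: cext; rewrite cE; apply/eqP; rewrite -sqrf_eq0; apply/eqP.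
Qed.
Lemma Re_sq_le (z : R[i]) : Re z ^+ 2 <= cabs2 z.
Proof. by rewrite /cabs2 lerDl sqr_ge0. Qed.
End Cplx.


Section IP.
Variables (R : realType) (V : lmodType R[i]) (inner : V -> V -> R[i]).
Hypothesis ip : inner_product inner.
Local Notation Re := (@complex.Re R).
Local Notation Im := (@complex.Im R).
Definition NN (x : V) : R := Re (inner x x).

Lemma iDZl a x y z : inner (a *: x + y) z = a * inner x z + inner y z.
Proof. by case: ip. Qed.
Lemma iC x y : inner y x = (inner x y)^*%C.
Proof. by case: ip. Qed.
Lemma i0l z : inner 0 z = 0.
Proof.
have := iDZl 1 0 0 z; rewrite scaler0 addr0 mul1r => h.
by apply: (@addrI _ (inner 0 z)); rewrite addr0 -h.
Qed.
Lemma iDl x y z : inner (x + y) z = inner x z + inner y z.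
Proof. by rewrite -(scale1r x) iDZl mul1r scale1r. Qed.
Lemma iZl a x z : inner (a *: x) z = a * inner x z.
Proof. by rewrite -(addr0 (a *: x)) iDZl i0l addr0. Qed.
Lemma iNl x z : inner (- x) z = - inner x z.
Proof. by rewrite -scaleN1r iZl mulN1r. Qed.
Lemma iBl x y z : inner (x - y) z = inner x z - inner y z.
Proof. by rewrite iDl iNl. Qed.
Lemma i0r z : inner z 0 = 0.
Proof. by rewrite iC i0l conjc0. Qed.
Lemma iDr x y z : inner z (x + y) = inner z x + inner z y.
Proof. by rewrite iC iDl rmorphD /= -!iC. Qed.
Lemma iZr a x z : inner z (a *: x) = (a^*)%C * inner z x.
Proof. by rewrite iC iZl rmorphM /= -iC. Qed.
Lemma iNr x z : inner z (- x) = - inner z x.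
Proof. by rewrite iC iNl rmorphN /= -iC. Qed.
Lemma iBr x y z : inner z (x - y) = inner z x - inner z y.
Proof. by rewrite iDr iNr. Qed.

Lemma Im_ii x : Im (inner x x) = 0.
Proof. have h := congr1 (@complex.Im R) (iC x x); rewrite cImJ in h; lra. Qed.
Lemma ii_real x : inner x x = (NN x)%:C%C.
Proof. by apply: cext; rewrite ?cE ?Im_ii. Qed.
Lemma NN_ge0 x : 0 <= NN x.
Proof. by case: ip => _ _ h _; apply: h. Qed.
Lemma NN_eq0 x : NN x = 0 -> x = 0.
Proof. by case: ip => _ _ _ h e; apply: h; rewrite ii_real e. Qed.
Lemma NN0 : NN 0 = 0.
Proof. by rewrite /NN i0l. Qed.

Lemma NND x y : NN (x + y) = NN x + NN y + 2 * Re (inner x y).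
Proof.
rewrite /NN iDl !iDr (iC x y) !cE; lra.
Qed.
Lemma NNB x y : NN (x - y) = NN x + NN y - 2 * Re (inner x y).
Proof.
rewrite /NN iBl !iBr (iC x y) !cE; lra.
Qed.
Lemma NNZ a x : NN (a *: x) = cabs2 a * NN x.
Proof.
rewrite /NN iZl iZr ii_real /cabs2 !cE; ring.
Qed.
Lemma NNN x : NN (- x) = NN x.
Proof. by rewrite /NN iNl iNr opprK. Qed.

Lemma NN_sub_proj x y : NN y != 0 ->
  NN (x - ((NN y)^-1%:C%C * inner x y) *: y) = NN x - cabs2 (inner x y) / NN y.
Proof.
move=> hy; rewrite NNB NNZ iZr /cabs2.
set z := inner x y; set t := (NN y)^-1.
have ht : t * NN y = 1 by rewrite mulVf.
rewrite [(_ * z)^*%C]rmorphM /= !cE.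
have -> : Re z ^+ 2 + Im z ^+ 2 = cabs2 z by [].
rewrite /cabs2 /t. field. done.
Qed.

Lemma CS x y : cabs2 (inner x y) <= NN x * NN y.
Proof.
have [/NN_eq0 ->|hy] := eqVneq (NN y) 0.
  by rewrite i0r NN0 mulr0 /cabs2 !cE expr0n /= addr0.
have := NN_ge0 (x - ((NN y)^-1%:C%C * inner x y) *: y).
rewrite NN_sub_proj // subr_ge0 => h.
have hp : 0 < NN y by rewrite lt_neqAle eq_sym hy NN_ge0.
by rewrite -ler_pdivrMr // .
Qed.

Lemma iext x y : (forall z, inner z x = inner z y) -> x = y.
Proof.
move=> h; apply/eqP; rewrite -subr_eq0; apply/eqP/NN_eq0.
by rewrite /NN iBr h subrr cRe0.
Qed.

Lemma polar a b : inner a b =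
  Complex ((NN (a + b) - NN (a - b)) / 4 : R) ((NN (a + ci R *: b) - NN (a - ci R *: b)) / 4 : R).
Proof.
rewrite !NNB !NND !iZr.
rewrite !NNZ ciJ /cabs2; apply: cext; rewrite !cE; lra.
Qed.

End IP.


Section Norm.
Variables (R : realType) (V : lmodType R[i]) (inner : V -> V -> R[i]).
Hypothesis ip : inner_product inner.
Local Notation Re := (@complex.Re R).
Local Notation Im := (@complex.Im R).
Local Notation NN := (NN inner).
Local Notation hn := (hnorm inner).

Lemma hn_sq x : hn x ^+ 2 = NN x.
Proof. by rewrite /hnorm sqr_sqrtr // (NN_ge0 ip). Qed.
Lemma hn_ge0 x : 0 <= hn x.
Proof. exact: sqrtr_ge0. Qed.
Lemma hn_ltP x e : 0 < e -> (hn x < e) = (NN x < e ^+ 2).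
Proof.
move=> e0; rewrite /hnorm -(ltr_sqrt _ (exprn_gt0 2 e0)) sqrtr_sqr ger0_norm ?ltW //.
Qed.
Lemma absRe_le x y : `|Re (inner x y)| <= hn x * hn y.
Proof.
rewrite -ler_sqr ?nnegrE ?mulr_ge0 ?hn_ge0 //.
rewrite real_normK ?num_real // exprMn !hn_sq.
exact: le_trans (Re_sq_le _) (CS ip x y).
Qed.
End Norm.

Lemma inv_small (R : realType) (e : R) : 0 < e ->
  exists N : nat, forall n, (N <= n)%N -> (n.+1%:R)^-1 < e.
Proof.
move=> e0; exists (Num.bound e^-1) => n hn.
rewrite -[e]invrK ltf_pV2 ?posrE ?invr_gt0 //.
apply: lt_le_trans (archi_boundP _) _; first by rewrite invr_ge0 ltW.
by rewrite ler_nat; apply: leq_trans hn _.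
Qed.


Section Riesz.
Variables (R : realType) (V : lmodType R[i]) (inner : V -> V -> R[i]).
Hypothesis ip : inner_product inner.
Hypothesis hc : hcomplete inner.
Local Notation Re := (@complex.Re R).
Local Notation Im := (@complex.Im R).
Local Notation NN := (NN inner).
Local Notation hn := (hnorm inner).

Variable phi : V -> R[i].
Hypothesis lin : forall a x y, phi (a *: x + y) = a * phi x + phi y.
Variable C : R.
Hypothesis C0 : 0 < C.
Hypothesis bd : forall x, cabs2 (phi x) <= C * NN x.

Lemma phi0 : phi 0 = 0.
Proof.
have := lin 1 0 0; rewrite scaler0 addr0 mul1r => h.
by apply: (@addrI _ (phi 0)); rewrite addr0 -h.
Qed.
Lemma phiZ a x : phi (a *: x) = a * phi x.
Proof. by rewrite -(addr0 (a *: x)) lin phi0 addr0. Qed.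
Lemma phiD x y : phi (x + y) = phi x + phi y.
Proof. by rewrite -(scale1r x) lin mul1r scale1r. Qed.
Lemma phiB x y : phi (x - y) = phi x - phi y.
Proof. by rewrite phiD -scaleN1r phiZ mulN1r. Qed.

Lemma riesz : exists g, forall x, phi x = inner x g.
Proof.
have [[x1 hx1]|hno] := pselect (exists x, phi x != 0); last first.
  exists 0 => x; rewrite (i0r ip); apply/eqP/negPn/negP => h; apply: hno.
  by exists x.
pose A := [set x | phi x = 1].
pose S := NN @` A.
pose d := inf S.
have x1A : A ((phi x1)^-1 *: x1) by rewrite /A /= phiZ mulVf.
have Sne : S !=set0 by exists (NN ((phi x1)^-1 *: x1)); exists ((phi x1)^-1 *: x1).
have Slb : has_lbound S by exists 0 => _ [y _ <-]; exact: NN_ge0.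
have Sinf : has_inf S by split.
have dle : forall y, A y -> d <= NN y.
  by move=> y Ay; apply: (ge_inf Slb); exists y.
have d0 : 0 <= d by apply: lb_le_inf => // _ [y _ <-]; exact: NN_ge0.
have : forall n : nat, exists x, A x /\ NN x < d + (n.+1%:R)^-1.
  move=> n; have hp : 0 < (n.+1%:R : R)^-1 by rewrite invr_gt0 ltr0n.
  have [_ [y Ay <-] hy] := inf_adherent hp Sinf.
  by exists y.
case/choice => xs hxs.
have cau : forall m n, NN (xs m - xs n) <= 2 * (m.+1%:R)^-1 + 2 * (n.+1%:R)^-1.
  move=> m n; have [Am hm] := hxs m; have [An hn] := hxs n.
  have Ah : A ((2^-1 : R)%:C%C *: (xs m + xs n)).
    rewrite /A /= phiZ phiD Am An; apply: cext; rewrite !cE; [lra|lra].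
  have := dle _ Ah; rewrite (NNZ ip) /cabs2 !cE.
  have := NND ip (xs m) (xs n); have := NNB ip (xs m) (xs n).
  move=> h1 h2 h3. 
  have h4 : (2^-1 : R) ^+ 2 + 0 ^+ 2 = 4^-1 by field.
  rewrite h4 in h3.
  have h5 : 4 * d <= NN (xs m + xs n).
    by rewrite -(ler_pM2l (_ : 0 < 4^-1)) ?invr_gt0 // mulrA mulVf // mul1r.
  move: hm hn h1 h2 h5; set a := (m.+1%:R)^-1; set b := (n.+1%:R)^-1; lra.
have [x0 hx0] : exists x0, forall e, 0 < e -> exists N, forall n, (N <= n)%N -> hn (xs n - x0) < e.
  apply: hc => e e0.
  have e4 : 0 < e ^+ 2 / 4 by rewrite divr_gt0 ?exprn_gt0.
  have [N hN] := inv_small e4.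
  exists N => m n hm hn; rewrite (hn_ltP inner _ e0).
  apply: le_lt_trans (cau m n) _.
  have := hN _ hm; have := hN _ hn; set a := (m.+1%:R)^-1; set b := (n.+1%:R)^-1; lra.
have px0 : phi x0 = 1.
  have : cabs2 (1 - phi x0) = 0.
    apply/eqP; rewrite eq_le cabs2_ge0 andbT; apply/negP => /negP; rewrite -ltNge => hp.
    have hq : 0 < Num.sqrt (cabs2 (1 - phi x0) / C) by rewrite sqrtr_gt0 divr_gt0.
    have [N hN] := hx0 _ hq.
    have := hN N (leqnn N); rewrite (hn_ltP inner) ?sqrtr_gt0 ?divr_gt0 //.
    rewrite sqr_sqrtr ?divr_ge0 ?ltW // => h.
    have := bd (xs N - x0); rewrite phiB (proj1 (hxs N)).
    rewrite -(ler_pM2l (_ : 0 < C^-1)) ?invr_gt0 // mulrA mulVf ?gt_eqF // mul1r.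
    rewrite mulrC; move=> h'; have := le_lt_trans h' h; rewrite ltxx //.
  by move/cabs2_eq0/eqP; rewrite subr_eq0 => /eqP <-.
have Nx0 : NN x0 <= d.
  apply/ler_addgt0Pr => e e0.
  pose M := d + 2.
  have M0 : 0 < M by rewrite /M; lra.
  pose r := Num.min 1 (e / (2 * (1 + 2 * M))).
  have r0 : 0 < r by rewrite lt_min ltr01 /= divr_gt0 // mulr_gt0 //; lra.
  have r1 : r <= 1 by rewrite ge_min lexx.
  have r2 : r * (2 * (1 + 2 * M)) <= e.
    rewrite -ler_pdivlMr ?mulr_gt0 //; first by rewrite ge_min lexx orbT.
    lra.
  have e2 : 0 < e / 2 by rewrite divr_gt0.
  have [N1 hN1] := inv_small e2.
  have [N2 hN2] := hx0 r r0.
  pose n := maxn N1 N2.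
  have ht := hN2 n (leq_maxr _ _).
  have hi := hN1 n (leq_maxl _ _).
  have t0 := hn_ge0 inner (xs n - x0).
  have hxn := proj2 (hxs n).
  have i0 : 0 < (n.+1%:R : R)^-1 by rewrite invr_gt0 ltr0n.
  have i1 : (n.+1%:R : R)^-1 <= 1 by rewrite invf_le1 ?ltr0n // ler1n.
  have s0 := hn_ge0 inner (xs n).
  have ss := hn_sq ip (xs n).
  have hb : hn (xs n) <= M.
    rewrite /M; move: ss hxn i1; set s := hn (xs n); set a := (n.+1%:R)^-1.
    move=> ss hxn i1; nra.
  have expand : NN x0 <= NN (xs n) + hn (xs n - x0) ^+ 2 + 2 * (hn (xs n) * hn (xs n - x0)).
    rewrite {1}(_ : x0 = xs n - (xs n - x0)); last by rewrite opprB addrC subrK.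
    rewrite (NNB ip) (hn_sq ip).
    have := absRe_le ip (xs n) (xs n - x0).
    set q := complex.Re _; move=> hq.
    have : - q <= `|q| by rewrite -normrN ler_norm.
    lra.
  move: expand ht hi hb hxn r1 r2 t0 s0 i0.
  set t := hn (xs n - x0); set s := hn (xs n); set a := (n.+1%:R)^-1.
  move=> expand ht hi hb hxn r1 r2 t0 s0 i0.
  have tt : t ^+ 2 <= t by nra.
  have st : s * t <= M * t by nra.
  have tr : t * (2 * (1 + 2 * M)) <= e by nra.
  nra.
have orth : forall z, phi z = 0 -> inner x0 z = 0.
  move=> z pz; have [/(NN_eq0 ip) ->|hz] := eqVneq (NN z) 0; first by rewrite (i0r ip).
  have hp : 0 < NN z by rewrite lt_neqAle eq_sym hz (NN_ge0 ip).
  have Ay : A (x0 - (((NN z)^-1)%:C%C * inner x0 z) *: z).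
    by rewrite /A /= phiB phiZ pz mulr0 subr0.
  have := dle _ Ay; rewrite (NN_sub_proj ip) // => h.
  have h1 : cabs2 (inner x0 z) / NN z <= 0 by lra.
  have h2 : 0 <= cabs2 (inner x0 z) / NN z by rewrite divr_ge0 ?cabs2_ge0 ?ltW.
  have : cabs2 (inner x0 z) / NN z = 0 by apply/eqP; rewrite eq_le h1 h2.
  move/eqP; rewrite mulf_eq0 invr_eq0 (negbTE hz) orbF => /eqP.
  exact: cabs2_eq0.
have nx0 : NN x0 != 0.
  apply/eqP => /(NN_eq0 ip) h; move: px0; rewrite h phi0 => /eqP.
  by rewrite eq_sym oner_eq0.
exists (((NN x0)^-1)%:C%C *: x0) => x.
have pn : phi (x - phi x *: x0) = 0 by rewrite phiB phiZ px0 mulr1 subrr.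
have h' : inner (x - phi x *: x0) x0 = 0 by rewrite (iC ip) orth // conjc0.
rewrite (iBl ip) (iZl ip) (ii_real ip) in h'.
have h'' : inner x x0 = phi x * (NN x0)%:C%C by apply/eqP; rewrite -subr_eq0 h'.
rewrite (iZr ip) h''.
apply: cext; rewrite !cE; field; exact: nx0.
Qed.
End Riesz.


Section Meas.
Variables (R : realType) (d : measure_display) (T : measurableType d)
  (mu : {measure set T -> \bar R}).
Local Notation Re := (@complex.Re R).
Local Notation Im := (@complex.Im R).
Local Notation cmeas := (@cmeasurable R d T).
Local Notation sqint := (sqint mu).
Local Notation Ri f := (Rintegral mu setT f).

Lemma cmeasD (a b : T -> R[i]) : cmeas a -> cmeas b -> cmeas (fun w => a w + b w).
Proof.
move=> [ha1 ha2] [hb1 hb2]; split.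
  by under eq_fun do rewrite cReD; exact: measurable_funD.
by under eq_fun do rewrite cImD; exact: measurable_funD.
Qed.
Lemma cmeasN (a : T -> R[i]) : cmeas a -> cmeas (fun w => - a w).
Proof.
move=> [ha1 ha2]; split.
  by under eq_fun do rewrite cReN; exact: measurableT_comp.
by under eq_fun do rewrite cImN; exact: measurableT_comp.
Qed.
Lemma cmeasB (a b : T -> R[i]) : cmeas a -> cmeas b -> cmeas (fun w => a w - b w).
Proof. by move=> ha hb; apply: cmeasD => //; exact: cmeasN. Qed.
Lemma cmeasZ (c : R[i]) (a : T -> R[i]) : cmeas a -> cmeas (fun w => c * a w).
Proof.
move=> [ha1 ha2]; split.
  under eq_fun do rewrite cReM.
  by apply: measurable_funB; apply: measurable_funM => //; exact: measurable_cst.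
under eq_fun do rewrite cImM.
by apply: measurable_funD; apply: measurable_funM => //; exact: measurable_cst.
Qed.
Lemma cmeas_c2 (a : T -> R[i]) : cmeas a -> measurable_fun setT (fun w => cabs2 (a w)).
Proof.
move=> [ha1 ha2]; rewrite /cabs2.
by apply: measurable_funD; apply: measurable_funX.
Qed.
Lemma cmeas_c2E (a : T -> R[i]) : cmeas a -> measurable_fun setT (EFin \o (fun w => cabs2 (a w))).
Proof. by move=> ha; apply/measurable_EFinP; exact: cmeas_c2. Qed.

Definition L2 (a : T -> R[i]) := cmeas a /\ (sqint a < +oo)%E.

Lemma sqint_ge0 a : (0 <= sqint a)%E.
Proof. by apply: integral_ge0 => w _; rewrite lee_fin cabs2_ge0. Qed.

Lemma sqint_le2 (a b c : T -> R[i]) : cmeas a -> cmeas b -> cmeas c ->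
  (forall w, cabs2 (c w) <= 2 * cabs2 (a w) + 2 * cabs2 (b w)) ->
  (sqint c <= 2%:E * sqint a + 2%:E * sqint b)%E.
Proof.
move=> ha hb hc h; rewrite /sqint.
rewrite -ge0_integralZl //; last 2 first.
- exact: cmeas_c2E.
- by move=> w _; rewrite lee_fin cabs2_ge0.
rewrite -ge0_integralZl //; last 2 first.
- exact: cmeas_c2E.
- by move=> w _; rewrite lee_fin cabs2_ge0.
rewrite -ge0_integralD //; last 4 first.
- by move=> w _; rewrite -EFinM lee_fin mulr_ge0 // cabs2_ge0.
- by apply/measurable_EFinP; apply: measurable_funM; [exact: measurable_cst|exact: cmeas_c2].
- by move=> w _; rewrite -EFinM lee_fin mulr_ge0 // cabs2_ge0.
- by apply/measurable_EFinP; apply: measurable_funM; [exact: measurable_cst|exact: cmeas_c2].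
apply: ge0_le_integral => //.
- by move=> w _; rewrite lee_fin cabs2_ge0.
- exact: cmeas_c2E.
- apply/measurable_EFinP; apply: measurable_funD;
  by apply: measurable_funM; [exact: measurable_cst|exact: cmeas_c2].
by move=> w _; rewrite -!EFinM -EFinD lee_fin.
Qed.

Lemma c2_add_le (x y : R[i]) : cabs2 (x + y) <= 2 * cabs2 x + 2 * cabs2 y.
Proof.
rewrite /cabs2 !cE; have := sqr_ge0 (Re x - Re y); have := sqr_ge0 (Im x - Im y).
set a := Re x; set b := Re y; set c := Im x; set e := Im y; nra.
Qed.
Lemma c2_sub_le (x y : R[i]) : cabs2 (x - y) <= 2 * cabs2 x + 2 * cabs2 y.
Proof.
rewrite /cabs2 !cE; have := sqr_ge0 (Re x + Re y); have := sqr_ge0 (Im x + Im y).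
set a := Re x; set b := Re y; set c := Im x; set e := Im y; nra.
Qed.

Lemma L2D a b : L2 a -> L2 b -> L2 (fun w => a w + b w).
Proof.
move=> [ha fa] [hb fb]; split; first exact: cmeasD.
apply: le_lt_trans (sqint_le2 ha hb (cmeasD ha hb) (fun w => c2_add_le _ _)) _.
by apply: lte_add_pinfty; apply: lte_mul_pinfty.
Qed.
Lemma L2B a b : L2 a -> L2 b -> L2 (fun w => a w - b w).
Proof.
move=> [ha fa] [hb fb]; split; first exact: cmeasB.
apply: le_lt_trans (sqint_le2 ha hb (cmeasB ha hb) (fun w => c2_sub_le _ _)) _.
by apply: lte_add_pinfty; apply: lte_mul_pinfty.
Qed.
Lemma L2Z c a : L2 a -> L2 (fun w => c * a w).
Proof.
move=> [ha fa]; split; first exact: cmeasZ.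
have h : forall w, cabs2 (c * a w) = cabs2 c * cabs2 (a w) by move=> w; rewrite /cabs2 !cE; ring.
rewrite /sqint; under eq_integral do rewrite h EFinM.
rewrite ge0_integralZl //; first by apply: lte_mul_pinfty => //; rewrite lee_fin cabs2_ge0.
- exact: cmeas_c2E.
- by move=> w _; rewrite lee_fin cabs2_ge0.
- by rewrite lee_fin cabs2_ge0.
Qed.

Lemma L2_int a : L2 a -> mu.-integrable setT (EFin \o (fun w => cabs2 (a w))).
Proof.
move=> [ha fa]; apply/integrableP; split; first exact: cmeas_c2E.
rewrite (eq_integral (fun w => (cabs2 (a w))%:E)) // => w _.
by rewrite /comp abse_EFin ger0_norm // cabs2_ge0.
Qed.
Lemma L2_Ri a : L2 a -> (Ri (fun w => cabs2 (a w)))%:E = sqint a.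
Proof.
move=> [ha fa]; rewrite /Rintegral fineK // ge0_fin_numE //.
exact: sqint_ge0.
Qed.
End Meas.


Section Prod.
Variables (R : realType) (d : measure_display) (T : measurableType d)
  (mu : {measure set T -> \bar R}).
Local Notation Re := (@complex.Re R).
Local Notation Im := (@complex.Im R).
Local Notation Ri f := (Rintegral mu setT f).
Local Notation rint f := (mu.-integrable setT (EFin \o f)).

Lemma Rint_sub4 (f g : T -> R) : rint f -> rint g ->
  rint (fun w => (f w - g w) / 4) /\ Ri (fun w => (f w - g w) / 4) = (Ri f - Ri g) / 4.
Proof.
move=> hf hg.
have hB : rint (fun w => f w - g w).
  apply: (eq_integrable measurableT _ _ _ (integrableB measurableT hf hg)) => w _ //.
split.
  apply: (eq_integrable measurableT _ _ _ (integrableZr measurableT 4^-1 hB)) => w _ //.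
rewrite RintegralZr //; congr (_ * _); exact: RintegralB.
Qed.

Lemma cintB (a b : T -> R[i]) : cintegrable mu a -> cintegrable mu b ->
  cintegrable mu (fun w => a w - b w) /\
  cintegral mu (fun w => a w - b w) = cintegral mu a - cintegral mu b.
Proof.
move=> [ha1 ha2] [hb1 hb2].
have h1 : rint (fun w => Re (a w - b w)).
  by apply: (eq_integrable measurableT _ _ _ (integrableB measurableT ha1 hb1)) => w _; rewrite /= cReB.
have h2 : rint (fun w => Im (a w - b w)).
  by apply: (eq_integrable measurableT _ _ _ (integrableB measurableT ha2 hb2)) => w _; rewrite /= cImB.
split => //; rewrite /cintegral; apply: cext.
  rewrite cReB !cRecpx (@eq_Rintegral _ _ _ mu setT (fun w => Re (a w) - Re (b w))); last by move=> w _; rewrite cReB.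
  exact: RintegralB.
rewrite cImB !cImcpx (@eq_Rintegral _ _ _ mu setT (fun w => Im (a w) - Im (b w))); last by move=> w _; rewrite cImB.
  exact: RintegralB.
Qed.

Lemma cintD (a b : T -> R[i]) : cintegrable mu a -> cintegrable mu b ->
  cintegrable mu (fun w => a w + b w) /\
  cintegral mu (fun w => a w + b w) = cintegral mu a + cintegral mu b.
Proof.
move=> [ha1 ha2] [hb1 hb2].
have h1 : rint (fun w => Re (a w + b w)).
  by apply: (eq_integrable measurableT _ _ _ (integrableD measurableT ha1 hb1)) => w _; rewrite /= cReD.
have h2 : rint (fun w => Im (a w + b w)).
  by apply: (eq_integrable measurableT _ _ _ (integrableD measurableT ha2 hb2)) => w _; rewrite /= cImD.
split => //; rewrite /cintegral; apply: cext.
  rewrite cReD !cRecpx (@eq_Rintegral _ _ _ mu setT (fun w => Re (a w) + Re (b w))); last by move=> w _; rewrite cReD.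
  exact: RintegralD.
rewrite cImD !cImcpx (@eq_Rintegral _ _ _ mu setT (fun w => Im (a w) + Im (b w))); last by move=> w _; rewrite cImD.
  exact: RintegralD.
Qed.

Lemma ReMJ (x y : R[i]) : Re (x * y^*%C) = (cabs2 (x + y) - cabs2 (x - y)) / 4.
Proof. by rewrite /cabs2 !cE; field. Qed.
Lemma ImMJ (x y : R[i]) : Im (x * y^*%C) = (cabs2 (x + ci R * y) - cabs2 (x - ci R * y)) / 4.
Proof. by rewrite /cabs2 !cE; field. Qed.

Lemma L2prod (u v : T -> R[i]) : L2 mu u -> L2 mu v ->
  cintegrable mu (fun w => u w * (v w)^*%C) /\
  cintegral mu (fun w => u w * (v w)^*%C) =
  Complex ((Ri (fun w => cabs2 (u w + v w)) - Ri (fun w => cabs2 (u w - v w))) / 4)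
          ((Ri (fun w => cabs2 (u w + ci R * v w)) - Ri (fun w => cabs2 (u w - ci R * v w))) / 4).
Proof.
move=> hu hv.
have hiv := L2Z (ci R) hv.
have [i1 e1] := Rint_sub4 (L2_int (L2D hu hv)) (L2_int (L2B hu hv)).
have [i2 e2] := Rint_sub4 (L2_int (L2D hu hiv)) (L2_int (L2B hu hiv)).
have E1 : (fun w => Re (u w * (v w)^*%C)) =
          (fun w => (cabs2 (u w + v w) - cabs2 (u w - v w)) / 4).
  by apply: funext => w; rewrite ReMJ.
have E2 : (fun w => Im (u w * (v w)^*%C)) =
          (fun w => (cabs2 (u w + ci R * v w) - cabs2 (u w - ci R * v w)) / 4).
  by apply: funext => w; rewrite ImMJ.
rewrite /cintegrable /cintegral.
have -> : (fun w => (Re (u w * (v w)^*%C))%:E) = EFin \o (fun w => Re (u w * (v w)^*%C)) by [].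
have -> : (fun w => (Im (u w * (v w)^*%C))%:E) = EFin \o (fun w => Im (u w * (v w)^*%C)) by [].
rewrite E1 E2; split => //.
by rewrite e1 e2.
Qed.
End Prod.


Section Ops.
Variables (R : realType) (V : lmodType R[i]) (inner : V -> V -> R[i]).
Hypothesis ip : inner_product inner.
Local Notation Re := (@complex.Re R).
Local Notation Im := (@complex.Im R).
Local Notation NN := (NN inner).
Local Notation hn := (hnorm inner).

Lemma bl_NN A : bounded_linear inner A -> exists c, 0 <= c /\ forall x, NN (A x) <= c * NN x.
Proof.
move=> [_ [c hc]]; exists (c ^+ 2); split; first exact: sqr_ge0.
move=> x; rewrite -!(hn_sq ip) -exprMn.
have := hc x; have := hn_ge0 inner (A x); have := hn_ge0 inner x.
set a := hn (A x); set b := hn x => h1 h2 h3; nra.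
Qed.

Variables (K Kadj Kdag : V -> V).
Hypothesis hc : hcomplete inner.
Hypothesis bK : bounded_linear inner K.
Hypothesis adjK : is_adjoint inner K Kadj.
Hypothesis mp : is_MP_inverse inner K Kdag.

Lemma Kdag_adj f : exists g, forall x, inner f (Kdag x) = inner g x.
Proof.
case: mp => bd _ _ _ _.
have [cd [cd0 hcd]] := bl_NN bd.
have lin : forall a x y, inner (Kdag (a *: x + y)) f = a * inner (Kdag x) f + inner (Kdag y) f.
  by move=> a x y; rewrite (proj1 bd) (iDZl ip).
have C0 : 0 < cd * NN f + 1 by have := NN_ge0 ip f; nra.
have bnd : forall x, cabs2 (inner (Kdag x) f) <= (cd * NN f + 1) * NN x.
  move=> x; apply: le_trans (CS ip _ _) _.
  have := hcd x; have := NN_ge0 ip f; have := NN_ge0 ip x; have := NN_ge0 ip (Kdag x).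
  set a := NN (Kdag x); set b := NN x; set c := NN f => h1 h2 h3 h4; nra.
have [g hg] := riesz ip hc lin C0 bnd.
by exists g => x; rewrite (iC ip) hg -(iC ip).
Qed.

Lemma Kadj_lin a x y : Kadj (a *: x + y) = a *: Kadj x + Kadj y.
Proof.
apply: (iext ip) => z; rewrite (iDr ip) (iZr ip) -!adjK.
by rewrite (iDr ip) (iZr ip).
Qed.
Lemma Kadj_D x y : Kadj (x + y) = Kadj x + Kadj y.
Proof. by rewrite -(scale1r x) Kadj_lin !scale1r. Qed.
Lemma Kadj_Z a x : Kadj (a *: x) = a *: Kadj x.
Proof.
have h0 : Kadj 0 = 0.
  have := Kadj_lin 1 0 0; rewrite scaler0 addr0 scale1r => h.
  by apply: (@addrI _ (Kadj 0)); rewrite addr0 -h.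
by rewrite -(addr0 (a *: x)) Kadj_lin h0 addr0.
Qed.
Lemma Kadj_B x y : Kadj (x - y) = Kadj x - Kadj y.
Proof. by rewrite Kadj_D -scaleN1r Kadj_Z scaleN1r. Qed.

Lemma KadjG f g : (forall x, inner f (Kdag x) = inner g x) -> Kadj g = Kdag (K f).
Proof.
move=> hg; case: mp => _ _ _ _ sa.
apply: (iext ip) => z; rewrite -adjK (iC ip) -hg -(iC ip).
exact: sa.
Qed.

Lemma KadjG_inner f g h : (forall x, inner f (Kdag x) = inner g x) ->
  inner (Kadj g) (Kadj h) = inner (K f) h.
Proof.
move=> hg; rewrite -adjK (KadjG hg).
by case: mp => _ -> _ _ _.
Qed.

Lemma KadjG_NN : exists c, 0 <= c /\ forall f g, (forall x, inner f (Kdag x) = inner g x) ->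
  NN (Kadj g) <= c * NN f.
Proof.
have [cd [cd0 hcd]] := bl_NN (match mp with And5 b _ _ _ _ => b end).
have [ck [ck0 hck]] := bl_NN bK.
exists (cd * ck); split; first exact: mulr_ge0.
move=> f g hg; rewrite (KadjG hg); apply: le_trans (hcd _) _.
by rewrite -mulrA ler_wpM2l.
Qed.

End Ops.


Section Frame.
Variables (R : realType) (V : lmodType R[i]) (inner : V -> V -> R[i]).
Hypothesis ip : inner_product inner.
Variables (d : measure_display) (T : measurableType d) (mu : {measure set T -> \bar R}).
Variables (K Kadj : V -> V) (F : T -> V).
Hypothesis adjK : is_adjoint inner K Kadj.
Hypothesis pf : parseval_cont_Kframe inner mu Kadj F.
Local Notation Re := (@complex.Re R).
Local Notation Im := (@complex.Im R).
Local Notation NN := (NN inner).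
Local Notation Ri f := (Rintegral mu setT f).

Lemma uL2 x : L2 mu (fun w => inner x (F w)).
Proof.
case: pf => wm hp; split; first exact: wm.
by rewrite hp ltry.
Qed.
Lemma uRi x : Ri (fun w => cabs2 (inner x (F w))) = NN (Kadj x).
Proof.
have := L2_Ri (uL2 x); case: pf => _ ->; rewrite (hn_sq ip).
by case.
Qed.

Lemma frame_prod g h :
  cintegrable mu (fun w => inner g (F w) * inner (F w) h) /\
  cintegral mu (fun w => inner g (F w) * inner (F w) h) = inner (Kadj g) (Kadj h).
Proof.
have -> : (fun w => inner g (F w) * inner (F w) h) =
          (fun w => inner g (F w) * (inner h (F w))^*%C).
  by apply: funext => w; rewrite -(iC ip).
have [hi he] := L2prod (uL2 g) (uL2 h); split => //; rewrite he.
have E1 : (fun w => cabs2 (inner g (F w) + inner h (F w))) = (fun w => cabs2 (inner (g + h) (F w))).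
  by apply: funext => w; rewrite (iDl ip).
have E2 : (fun w => cabs2 (inner g (F w) - inner h (F w))) = (fun w => cabs2 (inner (g - h) (F w))).
  by apply: funext => w; rewrite (iBl ip).
have E3 : (fun w => cabs2 (inner g (F w) + ci R * inner h (F w))) =
          (fun w => cabs2 (inner (g + ci R *: h) (F w))).
  by apply: funext => w; rewrite (iDl ip) (iZl ip).
have E4 : (fun w => cabs2 (inner g (F w) - ci R * inner h (F w))) =
          (fun w => cabs2 (inner (g - ci R *: h) (F w))).
  by apply: funext => w; rewrite (iBl ip) (iZl ip).
rewrite E1 E2 E3 E4 !uRi (polar ip (Kadj g) (Kadj h)).
by rewrite (Kadj_D ip adjK) (Kadj_B ip adjK) (Kadj_D ip adjK) (Kadj_B ip adjK) !(Kadj_Z ip adjK).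
Qed.
End Frame.

Unset Implicit Arguments.

Theorem lemma3p3 (R : realType) (V : lmodType R[i]) (inner : V -> V -> R[i])
  (d : measure_display) (T : measurableType d) (mu : {measure set T -> \bar R})
  (K Kadj Kdag : V -> V) (F G : T -> V) :
  separable_hilbert_space inner ->
  bounded_linear inner K ->
  closed_range inner K ->
  is_adjoint inner K Kadj ->
  is_MP_inverse inner K Kdag ->
  parseval_cont_Kframe inner mu Kadj F ->
  weakly_measurable inner G ->
  (dual_cont_K_bessel inner mu K F G <->
   exists phi : V -> T -> R[i],
     [/\ bounded_to_L2 inner mu phi,
         (forall f : V, weak_integral_is inner mu (phi f) F 0) &
         (forall (f : V) (w : T), phi f w = inner f (G w - Kdag (F w)))]).
Proof.
move=> [ip hc _] bK _ adjK mp pf wmG.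
have [cg [cg0 hcg]] := KadjG_NN ip bK adjK mp.
have sqb : forall g, sqint mu (fun w => inner g (F w)) = (NN inner (Kadj g))%:E.
  by move=> g; rewrite -(L2_Ri (uL2 pf g)) (uRi ip pf).
split.
- move=> [[_ [B [B0 hB]]] hdual].
  exists (fun f w => inner f (G w - Kdag (F w))); split => //.
  + have pe : forall f g, (forall x, inner f (Kdag x) = inner g x) ->
        (fun w => inner f (G w - Kdag (F w))) = (fun w => inner f (G w) - inner g (F w)).
      by move=> f g hg; apply: funext => w; rewrite (iBr ip) hg.
    have hG : forall f, L2 mu (fun w => inner f (G w)).
      by move=> f; split; [exact: wmG | exact: le_lt_trans (hB f) (ltry _)].
    split.
    * move=> f; have [g hg] := Kdag_adj ip hc mp f; rewrite (pe _ _ hg).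
      exact: L2B (hG f) (uL2 pf g).
    * by move=> a f g w; rewrite (iDZl ip).
    * exists (2 * B + 2 * cg) => f; have [g hg] := Kdag_adj ip hc mp f; rewrite (pe _ _ hg).
      apply: le_trans (sqint_le2 mu (proj1 (hG f)) (proj1 (uL2 pf g))
                  (cmeasB (proj1 (hG f)) (proj1 (uL2 pf g))) (fun w => c2_sub_le _ _)) _.
      rewrite sqb.
      apply: le_trans (leeD (lee_wpmul2l _ (hB f)) (lexx _)) _; first by rewrite lee_fin.
      rewrite -!EFinM -EFinD lee_fin (hn_sq ip).
      have := hcg f g hg; have := NN_ge0 ip f; nra.
  + move=> f h; have [g hg] := Kdag_adj ip hc mp f.
    have -> : (fun w => inner f (G w - Kdag (F w)) * inner (F w) h) =
              (fun w => inner f (G w) * inner (F w) h - inner g (F w) * inner (F w) h).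
      by apply: funext => w; rewrite (iBr ip) hg mulrBl.
    have [i1 e1] := hdual f h.
    have [i2 e2] := frame_prod ip adjK pf g h.
    have [i3 e3] := cintB i1 i2.
    split => //; rewrite e3 -e1 e2 (KadjG_inner ip adjK mp h hg) subrr.
    exact: i0l.
- move=> [phi [[hm hlin [c hc']] hw hp]].
  have pe : forall f g, (forall x, inner f (Kdag x) = inner g x) ->
      (fun w => inner f (G w)) = (fun w => phi f w + inner g (F w)).
    by move=> f g hg; apply: funext => w; rewrite hp (iBr ip) hg subrK.
  split.
  + split => //; exists (2 * `|c| + 2 * cg + 1); split.
      have := normr_ge0 c; lra.
    move=> f; have [g hg] := Kdag_adj ip hc mp f; rewrite (pe _ _ hg).
    apply: le_trans (sqint_le2 mu (proj1 (hm f)) (proj1 (uL2 pf g))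
                (cmeasD (proj1 (hm f)) (proj1 (uL2 pf g))) (fun w => c2_add_le _ _)) _.
    rewrite sqb.
    apply: le_trans (leeD (lee_wpmul2l _ (hc' f)) (lexx _)) _; first by rewrite lee_fin.
    rewrite -!EFinM -EFinD lee_fin (hn_sq ip).
    have := hcg f g hg; have := NN_ge0 ip f; have := ler_norm c.
    set n := NN inner f; set k := NN inner (Kadj g) => h1 h2 h3; nra.
  + move=> f h; have [g hg] := Kdag_adj ip hc mp f.
    have -> : (fun w => inner f (G w) * inner (F w) h) =
              (fun w => phi f w * inner (F w) h + inner g (F w) * inner (F w) h).
      by apply: funext => w; rewrite hp (iBr ip) hg -mulrDl subrK.
    have [i1 e1] := hw f h.
    have [i2 e2] := frame_prod ip adjK pf g h.
    have [i3 e3] := cintD i1 i2.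
    split => //; rewrite e3 -e1 e2 (KadjG_inner ip adjK mp h hg) (i0l ip) add0r.
    done.
Qed.
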